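(* Given positive integers $n$ and $g$, there exists an integer $d_0$, depending only on $n$ and $g$, such that for every integer $d>d_0$ and every subgroup $H\subset(\mathbb{Z}/d\mathbb{Z})^\times$ of index $2g$, every coset of $H$ in $(\mathbb{Z}/d\mathbb{Z})^\times$ contains an element whose least nonnegative residue modulo $d$ lies in the open interval $(0,d/n)$. *)

(* Defs.v *)
From mathcomp Require Import all_boot all_order all_algebra all_fingroup.
Set Implicit Arguments. Unset Strict Implicit. Unset Printing Implicit Defensive.

(* Least nonnegative residue of a unit u of 'Z_d (valid for d >= 2, where
   'Z_d is the ordinal type 'I_d). *)
Definition unit_residue (d : nat) (u : {unit 'Z_d}) : nat := nat_of_ord (val u).

(* Main.v *)
Require Import Defs.
From mathcomp Require Import all_boot all_order all_algebra all_fingroup.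
From mathcomp Require Import all_field.
From mathcomp Require Import zify ring lra.
Set Implicit Arguments. Unset Strict Implicit. Unset Printing Implicit Defensive.
Import Order.TTheory GRing.Theory Num.Theory.

(* Proof strategy: finite Fourier analysis on Z/dZ (values in algC).
   The count of representations x = j1 + j2 (0 <= j1, j2 < kL) with x in the
   coset is a main term (frequencies that are multiples of d/L, L = gcd(d, B!))
   plus an error bounded via an orbit/Parseval bound on coset Fourier
   coefficients, which is small because totient(d')^2 >> d' when d' has a large
   prime-power factor. *)

Lemma tot_sq s : 0 < s -> s <= 2 * totient s ^ 2 /\ (odd s -> s <= totient s ^ 2).
Proof.
elim/ltn_ind: s => s IH s0.
case: (leqP s 1) => s1.
  have -> : s = 1 by lia.
  by rewrite /totient /=.
have pp := pdiv_prime s1; set p := pdiv s in pp.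
have [m cpm sE] := pfactor_coprime pp s0.
set k := logn p s in sE.
have k0 : 0 < k by rewrite logn_gt0 mem_primes pp s0 pdiv_dvd.
have p1 := prime_gt1 pp.
have m0 : 0 < m by move: s0; rewrite sE muln_gt0 => /andP[].
have ms : m < s.
  rewrite sE -[X in X < _]muln1 ltn_pmul2l // (leq_trans p1) //.
  by rewrite -[X in X <= _]expn1 leq_pexp2l // ltnW.
have [IH1 IH2] := IH m ms m0.
have tE : totient s = totient m * (p.-1 * p ^ k.-1).
  by rewrite sE totient_coprime ?totient_pfactor // coprime_sym coprimeXl.
have pkE : p ^ k = p * p ^ k.-1 by rewrite -expnS prednK.
set t := p ^ k.-1 in tE pkE.
have t1 : 0 < t by rewrite expn_gt0 ltnW.
rewrite tE sE pkE.
set a := totient m in IH1 IH2 *.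
have [p2|p2] := eqVneq p 2.
  have om : odd m by rewrite -coprime2n -p2.
  split; last by rewrite oddM oddM p2 /= andbF.
  have := IH2 om; rewrite p2 /=; nia.
have p3 : 2 < p by move: p1 p2; lia.
have ptt : p * t <= (p.-1 * t) ^ 2.
  rewrite expnMn; apply: leq_mul; last by rewrite expnS expn1 leq_pmulr.
  have pE : p = p.-1.+1 by rewrite prednK // ltnW.
  move: p3; rewrite {1 2}pE; set r := p.-1 => r2; nia.
split; first by rewrite expnMn [X in _ <= X]mulnA; apply: leq_mul.
by rewrite !oddM => /andP[/IH2 h _]; rewrite expnMn; apply: leq_mul.
Qed.

Lemma tot_part d p : 0 < d -> p \in \pi(d) -> d`_p * d <= 8 * totient d ^ 2.
Proof.
move=> d0 pd.
have pp : prime p by move: pd; rewrite mem_primes => /and3P[].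
have v0 : 0 < logn p d by rewrite logn_gt0.
have dE := partnC p d0.
have cqr : coprime d`_p d`_p^' := coprime_partC _ _ _.
have r0 : 0 < d`_p^' by rewrite part_gt0.
have [h1 _] := tot_sq r0.
rewrite -{2 3}dE totient_coprime // p_part totient_pfactor //.
have pkE : p ^ logn p d = p * p ^ (logn p d).-1 by rewrite -expnS prednK.
rewrite pkE; set t := p ^ _.-1; set r := d`_p^' in h1 *.
have p1 := prime_gt1 pp.
have hp : p <= 2 * p.-1 by move: p1; clear; case: p => //= n; lia.

have e1 : (p * t) * (p * t) <= 4 * (p.-1 * t) ^ 2.
  have := leq_mul hp hp; rewrite expnMn; nia.
have := leq_mul e1 h1; rewrite expnMn !mulnA; nia.
Qed.

Lemma not_coprime_prime m n : 0 < m -> ~~ coprime m n ->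
  exists2 p, prime p & (p %| m) && (p %| n).
Proof.
move=> m0 nc; have g0 : 0 < gcdn m n by rewrite gcdn_gt0 m0.
have g1 : 1 < gcdn m n by move: nc g0; rewrite /coprime; lia.
exists (pdiv (gcdn m n)); first exact: pdiv_prime.
by rewrite -dvdn_gcd pdiv_dvd.
Qed.

Lemma coprime_prime_contra m n p : coprime m n -> prime p -> p %| m -> p %| n -> False.
Proof.
move=> c pp pm pn; have : p %| gcdn m n by rewrite dvdn_gcd pm.
by rewrite (eqP c) dvdn1 => /eqP p1; rewrite p1 in pp.
Qed.

Lemma lift_coprime d d' y : 0 < d -> d' %| d -> coprime y d' ->
  exists x, coprime x d /\ x %% d' = y %% d'.
Proof.
move=> d0 dd cy.
have d'0 : 0 < d' by apply: dvdn_gt0 dd.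
set pi := [pred p | ~~ (p %| y)].
set t := d`_pi.
have t0 : 0 < t by rewrite part_gt0.
have tP : forall p, prime p -> (p %| t) = (p %| d) && ~~ (p %| y).
  move=> p pp.
  have := pi_of_part pi d0 p; rewrite !mem_primes pp t0 /= => ->.
  by rewrite inE /= mem_primes pp d0.
exists (y + d' * t); split; last by rewrite addnC mulnC modnMDl.
apply/negPn/negP => /not_coprime_prime [| p pp /andP[px pd]].
  by rewrite addn_gt0 muln_gt0 d'0 t0 orbT.
have [py|npy] := boolP (p %| y).
  move: px; rewrite dvdn_addr // Euclid_dvdM // => /orP[pd'|pt].
    exact: coprime_prime_contra cy pp py pd'.
  by move: pt; rewrite tP // py andbF.
have pt : p %| t by rewrite tP // pd.
move: px; rewrite dvdn_addl ?dvdn_mull // => py.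
by rewrite py in npy.
Qed.

Lemma mod_cancel t n a b : coprime t n -> a * t = b * t %[mod n] -> a = b %[mod n].
Proof.
move=> ct; wlog ba : a b / b <= a.
  move=> W; case: (leqP b a) => h; first exact: W.
  by move/esym=> e; apply/esym/W => //; apply: ltnW.
move/eqP; rewrite eqn_mod_dvd ?leq_mul2r ?ba ?orbT // -mulnBl Gauss_dvdl.
  by rewrite -eqn_mod_dvd // => /eqP.
by rewrite coprime_sym.
Qed.

Section Zp.
Variable d : nat.
Hypothesis d1 : 1 < d.
Local Notation rho := (@unit_residue d).

Lemma rho_mul (u v : {unit 'Z_d}) : rho (u * v)%g = (rho u * rho v) %% d.
Proof.
rewrite /unit_residue FinRing.val_unitM -[X in (X * _)%R]natr_Zp.
by rewrite -[X in (_ * X)%R]natr_Zp -natrM val_Zp_nat.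
Qed.

Lemma rho_lt (u : {unit 'Z_d}) : rho u < d.
Proof. by rewrite /unit_residue -[X in _ < X]Zp_cast. Qed.

Lemma rho_gt0 (u : {unit 'Z_d}) : 0 < rho u.
Proof.
rewrite lt0n; apply/negP => /eqP h; have := valP u.
have -> : val u = 0%R by apply: val_inj; move: h; rewrite /unit_residue /= => ->.
by rewrite unitr0.
Qed.

Lemma rho_one : rho 1%g = 1.
Proof. by rewrite /unit_residue /= modn_small. Qed.

Lemma rho_inv (u : {unit 'Z_d}) : (rho u * rho u^-1) %% d = 1.
Proof. by rewrite -rho_mul mulgV rho_one. Qed.

Lemma rho_coprime (u : {unit 'Z_d}) : coprime d (rho u).
Proof.
have := valP u; rewrite -unitZpE //.
by rewrite /unit_residue natr_Zp.
Qed.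

Lemma rho_of_nat x : coprime d x -> exists u : {unit 'Z_d}, rho u = x %% d.
Proof.
move=> cx; have ux : ((x%:R)%R : 'Z_d) \is a GRing.unit by rewrite unitZpE.
by exists (FinRing.Unit ux); rewrite /unit_residue /= val_Zp_nat.
Qed.
End Zp.

Section Fourier.
Local Open Scope ring_scope.

Lemma conj_root (q : nat) (w : algC) : (0 < q)%N -> w ^+ q = 1 -> w^* = w ^+ q.-1.
Proof.
move=> q0 wq.
have nw : `|w| = 1.
  apply/eqP; rewrite -(pexpr_eq1 q0) ?normr_ge0 // -normrX wq normr1 //.
have w0 : w != 0.
  apply/negP=> /eqP w0; move: wq; rewrite w0 expr0n gtn_eqF //= => /eqP.
  by rewrite eq_sym oner_eq0.
have h1 : w^* * w = 1 by rewrite -normCKC nw expr1n.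
have h2 : w * w ^+ q.-1 = 1 by rewrite -exprS prednK.
by rewrite -[w^*]mulr1 -h2 mulrA h1 mul1r.
Qed.

Lemma orth (q : nat) (w : algC) : q.-primitive_root w -> forall x y : nat,
  \sum_(b < q) w ^+ (b * x) * (w ^+ (b * y))^* = (q * (x == y %[mod q]))%:R.
Proof.
move=> pw x y; have q0 := prim_order_gt0 pw; have wq := prim_expr_order pw.
have cw := conj_root q0 wq.
set z := w ^+ (x + q.-1 * y).
have -> : \sum_(b < q) w ^+ (b * x) * (w ^+ (b * y))^* = \sum_(b < q) z ^+ b.
  apply: eq_bigr => b _; rewrite rmorphXn /= cw -exprM -exprD /z -exprM.
  congr (_ ^+ _); lia.
have ez : (z == 1) = (x == y %[mod q]).
  rewrite /z -(prim_order_dvd pw) /dvdn -(eqn_modDr (q.-1 * y) x y).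
  have -> : (y + q.-1 * y = q * y)%N by rewrite -{1}[y]mul1n -mulnDl add1n prednK.
  by rewrite modnMr.
have [z1|nz] := eqVneq z 1.
  rewrite -ez z1 eqxx muln1 (eq_bigr (fun _ => 1)) ?sumr_const ?card_ord //.
  by move=> i _; rewrite expr1n.
rewrite -ez (negbTE nz) muln0; have zq : z ^+ q = 1.
  by rewrite /z -exprM mulnC exprM wq expr1n.
have : (z - 1) * \sum_(i < q) z ^+ i = 0 by rewrite -subrX1 zq subrr.
by move/eqP; rewrite mulf_eq0 subr_eq0 (negbTE nz) /= => /eqP.
Qed.

Lemma parseval (q : nat) (w : algC) (f : nat -> algC) : q.-primitive_root w ->
  \sum_(b < q) `|\sum_(y < q) f y * w ^+ (b * y)| ^+ 2
   = q%:R * \sum_(y < q) `|f y| ^+ 2.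
Proof.
move=> pw.
transitivity (\sum_(b < q) \sum_(y < q) \sum_(y' < q)
   (f y * (f y')^*) * (w ^+ (b * y) * (w ^+ (b * y'))^*)).
  apply: eq_bigr => b _; rewrite normCK rmorph_sum /= big_distrl /=.
  apply: eq_bigr => y _; rewrite big_distrr /=; apply: eq_bigr => y' _.
  by rewrite rmorphM /= mulrACA.
rewrite exchange_big /= big_distrr /=; apply: eq_bigr => y _.
rewrite exchange_big /= (bigD1 y) //= [X in _ + X]big1 ?addr0.
  by rewrite -big_distrr /= orth // eqxx muln1 normCK mulrC.
move=> y' ny'; rewrite -big_distrr /= orth // !modn_small //.
have/negbTE-> : (y : nat) != y' by rewrite eq_sym.
by rewrite muln0 mulr0.
Qed.

End Fourier.


Lemma part_sum (T : finType) (A : {set T}) (f : T -> nat) q (g : nat -> algC) :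
  (forall u, f u < q) ->
  (\sum_(u in A) g (f u) = \sum_(b < q) #|[set u in A | f u == b]|%:R * g b)%R.
Proof.
move=> fq.
rewrite (partition_big (fun u => Ordinal (fq u)) xpredT) //=.
apply: eq_bigr => b _.
rewrite mulr_natl -sumr_const; apply: eq_big => [u|u].
  by rewrite in_set.
by case/andP=> _ /eqP <-.
Qed.

Section Grp.
Variable d : nat.
Hypothesis d1 : 1 < d.
Local Notation rho := (@unit_residue d).
Variable H : {group {unit 'Z_d}}.
Variable d' : nat.
Hypothesis d'0 : 0 < d'.
Hypothesis dd : d' %| d.

Definition KK := [set u : {unit 'Z_d} | rho u %% d' == 1 %% d'].

Lemma rcoset_quot (c u v : {unit 'Z_d}) : u \in (H :* c)%g -> v \in (H :* c)%g ->
  (u * v^-1)%g \in H.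
Proof.
rewrite !mem_rcoset => hu hv.
have -> : (u * v^-1 = (u * c^-1) * (v * c^-1)^-1)%g.
  by rewrite invMg invgK mulgA mulgKV.
by rewrite groupM ?groupV.
Qed.

Lemma fiber_bound (c : {unit 'Z_d}) t b : coprime t d' ->
  #|[set u in (H :* c)%g | (rho u * t) %% d' == b]| <= #|H :&: KK|.
Proof.
move=> ct; set S := [set u in _ | _].
have [->|[u0 hu0]] := set_0Vmem S; first by rewrite cards0.
rewrite -(card_imset S (mulIg u0^-1)%g); apply: subset_leq_card.
apply/subsetP => _ /imsetP[u hu ->].
move: hu hu0; rewrite !inE => /andP[hu /eqP tu] /andP[hu0 /eqP tu0].
rewrite (rcoset_quot hu hu0) /=.
have e : rho u = rho u0 %[mod d'] by apply: (mod_cancel ct); rewrite tu tu0.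
rewrite rho_mul // (modn_dvdm _ dd) -modnMml e modnMml -(modn_dvdm _ dd).
by rewrite -rho_mul // mulgV rho_one.
Qed.

Lemma K_card : totient d' * #|KK| <= totient d.
Proof.
have d0 : 0 < d by apply: ltnW.
rewrite -(card_units_Zp d0) totient_count_coprime bigop.big_distrl /=.
have -> : #|units_Zp d| = \sum_(0 <= y < d') #|[set u : {unit 'Z_d} | rho u %% d' == y]|.
  rewrite /units_Zp cardsT -sum1_card big_mkord.
  rewrite (partition_big (fun u => Ordinal (ltn_pmod (rho u) d'0)) xpredT) //=.
  apply: eq_bigr => y _; rewrite -sum1_card; apply: eq_bigl => u.
  by rewrite inE.
rewrite big_nat [X in _ <= X]big_nat; apply: leq_sum => y /andP[_ yd]; case: (boolP (coprime d' y)) => cy; last by rewrite mul0n.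
rewrite mul1n.
have cy' : coprime y d' by rewrite coprime_sym.
have [x [cx xE]] := lift_coprime d0 dd cy'.
have cx' : coprime d x by rewrite coprime_sym.
have [u0 u0E] := rho_of_nat d1 cx'.
rewrite -(card_imset KK (mulgI u0)); apply: subset_leq_card.
apply/subsetP => _ /imsetP[k hk ->]; rewrite !inE.
move: hk; rewrite inE => /eqP hk.
rewrite rho_mul // (modn_dvdm _ dd) -modnMmr hk modnMmr muln1 u0E.
by rewrite (modn_dvdm _ dd) xE modn_small.
Qed.

Local Open Scope ring_scope.
Variable w : algC.
Hypothesis pw : d'.-primitive_root w.

Definition FF (c : {unit 'Z_d}) (b : nat) : algC :=
  \sum_(u in (H :* c)%g) w ^+ (b * rho u).

Lemma w_mod n : w ^+ (n %% d') = w ^+ n.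
Proof. exact: expr_mod (prim_expr_order pw). Qed.

Lemma w_modd n : w ^+ (n %% d) = w ^+ n.
Proof.
apply: expr_mod; rewrite -(divnK dd) mulnC exprM (prim_expr_order pw).
by rewrite expr1n.
Qed.

Lemma FF_mod c b : FF c (b %% d') = FF c b.
Proof. by apply: eq_bigr => u _; rewrite -w_mod modnMml w_mod. Qed.

Lemma FF_inv c h b : h \in H -> FF c (rho h * b) = FF c b.
Proof.
move=> hH; rewrite /FF [in RHS](reindex_inj (mulgI h)) /=.
apply: eq_big => [u|u _].
  by rewrite !mem_rcoset -mulgA (groupMl _ hH).
rewrite rho_mul // -[in RHS]w_modd modnMmr w_modd.
by congr (_ ^+ _); rewrite mulnCA mulnA.
Qed.

Definition cnt c y := #|[set u in (H :* c)%g | ((rho u * 1) %% d' == y)%N]|.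

Lemma FF_part c b : FF c b = \sum_(y < d') (cnt c y)%:R * w ^+ (b * y).
Proof.
rewrite /FF (eq_bigr (fun u => w ^+ (b * ((rho u * 1) %% d'))%N)); last first.
  by move=> u _; rewrite muln1 -[in RHS]w_mod modnMmr w_mod.
by rewrite (@part_sum _ _ _ d' (fun y => w ^+ (b * y))) // => u; rewrite ltn_pmod.
Qed.

Lemma cnt_le c y : (cnt c y <= #|H :&: KK|)%N.
Proof.
have := @fiber_bound c 1 y; rewrite /cnt; apply.
by rewrite /coprime gcd1n.
Qed.

Lemma cnt_sum c : \sum_(y < d') (cnt c y)%:R = #|H|%:R :> algC.
Proof.
have := @part_sum _ (H :* c)%g (fun u => (rho u * 1) %% d')%N d' (fun _ => 1).
rewrite sumr_const card_rcoset => ->; last by move=> u; rewrite ltn_pmod.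
by apply: eq_bigr => y _; rewrite mulr1.
Qed.

Lemma FF_bound c a' : coprime a' d' ->
  `|FF c a'| ^+ 2 <= (d' * #|H :&: KK| ^ 2)%:R.
Proof.
move=> ca; set k := #|H :&: KK|.
have Hpos : (0 < #|H|)%N := cardG_gt0 H.
have step1 : #|H|%:R * `|FF c a'| ^+ 2 =
    \sum_(h in H) `|FF c ((rho h * a') %% d')%N| ^+ 2.
  rewrite (eq_bigr (fun _ => `|FF c a'| ^+ 2)); last first.
    by move=> h hH; rewrite FF_mod FF_inv.
  by rewrite sumr_const mulr_natl.
have step2 : \sum_(h in H) `|FF c ((rho h * a') %% d')%N| ^+ 2 =
    \sum_(b < d') #|[set h in H | ((rho h * a') %% d' == b)%N]|%:R * `|FF c b| ^+ 2.
  by rewrite (@part_sum _ H (fun h => (rho h * a') %% d')%N d'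
     (fun b => `|FF c b| ^+ 2)) // => u; rewrite ltn_pmod.
have step3 : \sum_(b < d') #|[set h in H | ((rho h * a') %% d' == b)%N]|%:R * `|FF c b| ^+ 2
    <= k%:R * \sum_(b < d') `|FF c b| ^+ 2.
  rewrite mulr_sumr; apply: ler_sum => b _; apply: ler_wpM2r; first exact: exprn_ge0.
  rewrite ler_nat; have := @fiber_bound 1 a' b ca.
  by rewrite rcoset1.
have step4 : \sum_(b < d') `|FF c b| ^+ 2 = d'%:R * \sum_(y < d') `|(cnt c y)%:R| ^+ 2.
  rewrite -(@parseval d' w (fun y => (cnt c y)%:R) pw); apply: eq_bigr => b _.
  by rewrite FF_part.
have step5 : \sum_(y < d') `|(cnt c y)%:R : algC| ^+ 2 <= k%:R * #|H|%:R.
  rewrite -(cnt_sum c) mulr_sumr; apply: ler_sum => y _.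
  by rewrite normr_nat expr2 -!natrM ler_nat leq_mul2r cnt_le orbT.
have h1 : #|H|%:R * `|FF c a'| ^+ 2 <= k%:R * (d'%:R * (k%:R * #|H|%:R)).
  rewrite step1 step2; apply: (le_trans step3); rewrite step4.
  apply: ler_wpM2l; first by rewrite ler0n.
  by apply: ler_wpM2l; first by rewrite ler0n.
move: h1; rewrite (_ : k%:R * (d'%:R * (k%:R * #|H|%:R)) =
   #|H|%:R * (d' * k ^ 2)%:R); last by rewrite natrM natrX; ring.
by rewrite ler_pM2l ?ltr0n.
Qed.
End Grp.


Lemma count_one L x y : 0 < L -> \sum_(j < L) (x == y + j %[mod L]) = 1.
Proof.
move=> L0; set c := L - y %% L; set r := (x + c) %% L.
have rL : r < L by rewrite ltn_pmod.
have yc : y + c = (y %/ L).+1 * L.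
  rewrite /c {1}(divn_eq y L) -addnA subnKC; last by rewrite ltnW // ltn_pmod.
  by rewrite mulSn addnC.
have E : forall j : 'I_L, (x == y + j %[mod L]) = (j == Ordinal rL).
  move=> j; rewrite -(eqn_modDr c) -addnA (addnC j) addnA yc modnMDl.
  by rewrite (modn_small (ltn_ord j)) eq_sym.
rewrite (eq_bigr (fun j => nat_of_bool (j == Ordinal rL))); last by move=> j _; rewrite E.
rewrite (bigD1 (Ordinal rL)) // eqxx big1 ?addn0 // => j /negbTE ->.
by [].
Qed.

Lemma count_k L k x y : 0 < L -> \sum_(j < k * L) (x == y + j %[mod L]) = k.
Proof.
move=> L0; elim: k => [|k IH]; first by rewrite mul0n big_ord0.
rewrite mulSnr big_split_ord IH -addn1; congr (_ + _).
rewrite -(count_one x y L0); apply: eq_bigr => j _.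
by rewrite /= (addnCA y) modnMDl.
Qed.

Lemma sum_mult (f : nat -> algC) D L : 0 < D ->
  (\sum_(0 <= a < (D * L)%N | (D %| a)%N) f a = \sum_(0 <= b < L) f (D * b)%N)%R.
Proof.
move=> D0; elim: L => [|L IH]; first by rewrite muln0 !big_geq.
rewrite mulnS addnC (@big_cat_nat _ _ _ (D * L)) ?leq_addr //= IH.
rewrite big_nat_recr //=; congr (_ + _)%R.
rewrite big_ltn_cond; last by lia.
rewrite (dvdn_mulr L (dvdnn D)) big_nat_cond big1 ?addr0 //.
move=> a /andP[/andP[ha1 ha2] hd].
have : D %| a - D * L.
  by rewrite -(dvdn_addr _ (dvdn_mulr L (dvdnn D))) subnKC // ltnW.
by rewrite gtnNdvd //; lia.
Qed.

Section Main.
Variable d : nat.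
Hypothesis d1 : 1 < d.
Local Notation rho := (@unit_residue d).
Variables (H : {group {unit 'Z_d}}) (c : {unit 'Z_d}) (L k : nat).
Hypotheses (L0 : 0 < L) (Ld : L %| d) (k0 : 0 < k) (hT : 2 * (k * L) <= d).
Local Open Scope ring_scope.
Variable z : algC.
Hypothesis pz : d.-primitive_root z.
Local Notation T := (k * L)%N.

Definition Ch (a : nat) : algC := \sum_(u in (H :* c)%g) z ^+ (a * rho u).
Definition Jh (a : nat) : algC := \sum_(j < T) z ^+ (a * j).
Definition NN : nat :=
  (\sum_(u in (H :* c)%g) \sum_(j1 < T) \sum_(j2 < T) (rho u == j1 + j2))%N.

Lemma expand a : Ch a * (Jh a)^* ^+ 2 = \sum_(u in (H :* c)%g) \sum_(j1 < T)
   \sum_(j2 < T) z ^+ (a * rho u) * (z ^+ (a * (j1 + j2)))^*.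
Proof.
rewrite expr2 /Ch /Jh !rmorph_sum /= big_distrl; apply: eq_bigr => u _ /=.
rewrite big_distrl mulr_sumr /=; apply: eq_bigr => j1 _.
rewrite mulr_sumr mulr_sumr; apply: eq_bigr => j2 _.
by rewrite mulnDr exprD rmorphM.
Qed.

Lemma identity : \sum_(a < d) Ch a * (Jh a)^* ^+ 2 = (d * NN)%:R.
Proof.
under eq_bigr do rewrite expand.
rewrite exchange_big /= /NN natrM natr_sum mulr_sumr.
apply: eq_bigr => u _; rewrite exchange_big /= natr_sum mulr_sumr.
apply: eq_bigr => j1 _; rewrite exchange_big /= natr_sum mulr_sumr.
apply: eq_bigr => j2 _; rewrite orth // natrM !modn_small //.
  by apply: leq_trans hT; rewrite mul2n -addnn -addSn leq_add // ltnW.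
exact: rho_lt.
Qed.

Lemma inner_main x y : \sum_(a < d | (d %/ L %| a)%N) z ^+ (a * x) * (z ^+ (a * y))^*
   = (L * (x == y %[mod L]))%:R.
Proof.
have DL0 : (0 < d %/ L)%N by rewrite divn_gt0 // dvdn_leq // ltnW.
rewrite -(big_mkord (fun a => d %/ L %| a)%N (fun a => z ^+ (a * x) * (z ^+ (a * y))^*)).
have -> : \sum_(0 <= a < d | (d %/ L %| a)%N) z ^+ (a * x) * (z ^+ (a * y))^* =
   \sum_(0 <= a < (d %/ L * L)%N | (d %/ L %| a)%N) z ^+ (a * x) * (z ^+ (a * y))^*.
  by rewrite divnK.
rewrite sum_mult // (big_mkord xpredT (fun b => z ^+ (d %/ L * b * x) * (z ^+ (d %/ L * b * y))^*)).
rewrite -(orth (dvdn_prim_root pz Ld)).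
by apply: eq_bigr => b _; rewrite -!exprM !mulnA.
Qed.

Lemma main_part : \sum_(a < d | (d %/ L %| a)%N) Ch a * (Jh a)^* ^+ 2
   = (#|H| * T * (L * k))%:R.
Proof.
under eq_bigr do rewrite expand.
transitivity (\sum_(u in (H :* c)%g) \sum_(j1 < T) ((L * k)%N%:R : algC)).
  rewrite exchange_big /=; apply: eq_bigr => u _; rewrite exchange_big /=.
  apply: eq_bigr => j1 _; rewrite exchange_big /=.
  under eq_bigr do rewrite inner_main.
  by rewrite -natr_sum -bigop.big_distrr /= count_k.
rewrite sumr_const sumr_const card_ord card_rcoset -mulrnA.
rewrite -(mulr_natr ((L * k)%:R) (T * #|H|)) -natrM.
by congr (_%:R); lia.
Qed.

Lemma Td : (T <= d)%N.
Proof. by apply: leq_trans hT; rewrite leq_pmull. Qed.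

Lemma JE a : Jh a = \sum_(y < d) ((y < T)%N%:R * z ^+ (a * y)).
Proof.
rewrite /Jh -(big_ord_narrow (F := fun i : 'I_d => z ^+ (a * i)) Td) big_mkcond /=.
apply: eq_bigr => y _; case: ifP => _; by rewrite ?mul1r ?mul0r.
Qed.

Lemma cntT : \sum_(y < d) (y < T)%N%:R = T%:R :> algC.
Proof.
rewrite -natr_sum; congr (_%:R).
transitivity (\sum_(y < d | (y < T)%N) 1%N).
  by rewrite [RHS]big_mkcond; apply: eq_bigr => y _; case: ifP.
by rewrite (big_ord_narrow (F := fun _ => 1%N) Td) /= sum1_card card_ord.
Qed.

Lemma J_parseval : \sum_(a < d) `|Jh a| ^+ 2 = (d * T)%:R.
Proof.
under eq_bigr do rewrite JE.
rewrite (parseval (fun y => (y < T)%N%:R) pz) natrM -cntT; congr (_ * _).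
by apply: eq_bigr => y _; case: (y < T)%N; rewrite ?normr1 ?normr0 ?expr1n ?expr0n.
Qed.

Lemma J0 : Jh 0 = T%:R.
Proof.
rewrite /Jh (eq_bigr (fun _ => 1)); last by move=> j _; rewrite mul0n expr0.
by rewrite sumr_const card_ord.
Qed.

Lemma Jbad : \sum_(a < d | ~~ (d %/ L %| a)%N) `|Jh a| ^+ 2 <= (d * T)%:R - (T * T)%:R.
Proof.
have d0 : (0 < d)%N by apply: ltnW.
rewrite -J_parseval [X in _ <= X - _](bigID (fun a : 'I_d => (d %/ L %| a)%N)) /=.
rewrite addrAC lerDr subr_ge0.
rewrite (bigD1 (Ordinal d0)) ?dvdn0 //= J0 normr_nat natrM -expr2 lerDl.
by rewrite sumr_ge0 // => a _; exact: exprn_ge0.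
Qed.

Lemma NN_pos (beta : algC) : 0 <= beta -> beta * d%:R <= (#|H| * T)%:R ->
  (forall a : 'I_d, ~~ (d %/ L %| a)%N -> `|Ch a| <= beta) -> (0 < NN)%N.
Proof.
move=> b0 bd hb.
have Tpos : (0 < T)%N by rewrite muln_gt0 k0 L0.
have Hpos := cardG_gt0 H.
rewrite lt0n; apply/negP => /eqP N0.
have I := identity.
rewrite N0 muln0 (bigID (fun a : 'I_d => (d %/ L %| a)%N)) /= main_part in I.
set Err := \sum_(a < d | _) _ in I.
set M := (#|H| * T * (L * k))%:R in I.
have ME : M = (#|H| * T)%:R * T%:R by rewrite /M mulnC natrM mulrC (mulnC L).
have E1 : `|Err| <= beta * ((d * T)%:R - (T * T)%:R).
  apply: (le_trans (ler_norm_sum _ _ _)).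
  apply: (@le_trans _ _ (\sum_(a < d | ~~ (d %/ L %| a)%N) beta * `|Jh a| ^+ 2)).
    apply: ler_sum => a ha; rewrite normrM normrX norm_conjC.
    by apply: ler_wpM2r; [exact: exprn_ge0 | exact: hb].
  by rewrite -mulr_sumr; apply: ler_wpM2l => //; exact: Jbad.
have ME2 : M = `|Err|.
  have e : M = - Err by apply/eqP; rewrite -addr_eq0 I.
  have Ele : Err <= 0 by rewrite -oppr_ge0 -e ler0n.
  by rewrite ler0_norm.
have E2 : beta * (d * T)%:R <= M by rewrite ME natrM mulrA ler_wpM2r.
have F1 : M <= beta * (d * T)%:R - beta * (T * T)%:R by rewrite -mulrBr ME2.
have F2 : beta * (T * T)%:R <= 0.
  rewrite -(gerDl M); apply: le_trans E2; by rewrite -lerBrDr.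
have F3 : beta = 0.
  have : beta * (T * T)%:R == 0 by rewrite eq_le F2 mulr_ge0 // ler0n.
  by rewrite mulf_eq0 pnatr_eq0 muln_eq0 orbb eqn0Ngt Tpos orbF => /eqP.
have Mpos : 0 < M by rewrite ltr0n !muln_gt0 Hpos L0 k0.
by move: F1; rewrite F3 !mul0r subrr => h; have := lt_le_trans Mpos h; rewrite ltxx.
Qed.
End Main.


Lemma coprime_divg a d : 0 < gcdn a d -> coprime (a %/ gcdn a d) (d %/ gcdn a d).
Proof.
move=> e0; set e := gcdn a d.
have ea : a = e * (a %/ e) by rewrite mulnC divnK // dvdn_gcdl.
have ed : d = e * (d %/ e) by rewrite mulnC divnK // dvdn_gcdr.
rewrite /coprime -(eqn_pmul2l e0) muln_gcdr -ea -ed muln1.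
by [].
Qed.

Lemma key_ineq n m d d' T h K Hn phi p B :
  0 < n -> 0 < m -> 0 < phi -> B = 128 * n ^ 2 * m ^ 2 ->
  h <= K -> phi * K <= m * Hn -> B < p -> p * d' <= 8 * phi ^ 2 ->
  d <= 4 * n * T ->
  d' * h ^ 2 * d ^ 2 <= (Hn * T) ^ 2.
Proof.
move=> n0 m0 phi0 BE hK KH Bp pd dT.
have h1 : h * phi <= m * Hn by apply: leq_trans KH; rewrite mulnC leq_mul2l hK orbT.
have h2 : 16 * n ^ 2 * m ^ 2 * d' <= phi ^ 2.
  have : B * d' <= 8 * phi ^ 2 by apply: leq_trans pd; rewrite leq_mul2r ltnW ?orbT.
  rewrite BE; nia.
have h3 : d ^ 2 <= 16 * n ^ 2 * T ^ 2.
  have := leq_mul dT dT; rewrite mulnn => /leq_trans; apply; nia.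
have h4 : d' * m ^ 2 * d ^ 2 <= T ^ 2 * phi ^ 2.
  apply: (@leq_trans (d' * m ^ 2 * (16 * n ^ 2 * T ^ 2))).
    by rewrite leq_mul2l h3 orbT.
  have := leq_mul h2 (leqnn (T ^ 2)); nia.
have h5 : d' * h ^ 2 * d ^ 2 * phi ^ 2 <= (Hn * T) ^ 2 * phi ^ 2.
  apply: (@leq_trans (d' * d ^ 2 * (m * Hn) ^ 2)).
    have := leq_mul h1 h1; rewrite !mulnn => hh.
    have := leq_mul (leqnn (d' * d ^ 2)) hh; nia.
  have := leq_mul h4 (leqnn (Hn ^ 2)); nia.
by move: h5; rewrite leq_pmul2r // expn_gt0 phi0.
Qed.

Theorem proposition5p1 (n g : nat) (hn : 0 < n) (hg : 0 < g) :
  exists d0 : nat, forall d : nat, d0 < d -> 1 < d ->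
    forall H : {group {unit 'Z_d}},
      #|units_Zp d : H|%g = (2 * g)%N ->
      forall C, C \in rcosets H (units_Zp d) ->
        exists2 u : {unit 'Z_d}, u \in C &
          (0 < unit_residue u) && (unit_residue u * n < d).
Proof.
set m := (2 * g)%N.
have m0 : 0 < m by rewrite /m muln_gt0.
set B := 128 * n ^ 2 * m ^ 2.
exists (4 * n * B`!) => d hd d1 H hidx C /rcosetsP [c _ ->].
have d0 : 0 < d by apply: ltnW.
set L := gcdn d B`!.
have L0 : 0 < L by rewrite gcdn_gt0 d0.
have Ld : L %| d by apply: dvdn_gcdl.
have LB : L <= B`! by apply: dvdn_leq; [exact: fact_gt0 | exact: dvdn_gcdr].
set X := n * L.
have X0 : 0 < X by rewrite muln_gt0 hn.
set k := d %/ (2 * X).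
have hk1 : k * (2 * X) <= d by apply: leq_trunc_div.
have hk2 : d < k.+1 * (2 * X) by apply: ltn_ceil; rewrite muln_gt0.
have hX : 4 * X <= d.
  apply: ltnW; apply: leq_ltn_trans hd; rewrite /X -mulnA leq_mul2l leq_mul2l LB.
  by rewrite !orbT.
set P := k * X.
have kP1 : 2 * P <= d by move: hk1; rewrite /P; lia.
have kP2 : d < 4 * P by move: hk2; rewrite /P mulSn; lia.
have k0 : 0 < k by move: kP2; rewrite /P; case: k {hk1 hk2 P kP1} => //; lia.
have PE : P = n * (k * L) by rewrite /P /X mulnCA.
have hT : 2 * (k * L) <= d.
  apply: leq_trans kP1; rewrite PE leq_mul2l; apply/orP; right.
  by rewrite leq_pmull.
have dT : d <= 4 * n * (k * L) by rewrite -mulnA -PE ltnW.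
have [z pz] := C_prim_root_exists d0.
have Hsub : H \subset units_Zp d by apply: subsetT.
have Lag := Lagrange Hsub; rewrite hidx card_units_Zp // in Lag.
have bound : forall a : 'I_d, ~~ (d %/ L %| a) ->
    (`|Ch H c z a| * d%:R <= (#|H| * (k * L))%N%:R)%R.
  move=> a ha.
  have a0 : 0 < a.
    by rewrite lt0n; apply: contraNneq ha => ->; rewrite dvdn0.
  set e := gcdn a d.
  have e0 : 0 < e by rewrite gcdn_gt0 a0.
  have aE : (a : nat) = e * (a %/ e) by rewrite mulnC divnK // dvdn_gcdl.
  have dE : d = e * (d %/ e) by rewrite mulnC divnK // dvdn_gcdr.
  set d' := d %/ e; set a' := a %/ e.
  have d'0 : 0 < d' by rewrite divn_gt0 // dvdn_leq // dvdn_gcdr.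
  have dd : d' %| d by apply: dvdn_div; apply: dvdn_gcdr.
  have ca : coprime a' d' := coprime_divg e0.
  have pw := dvdn_prim_root pz dd.
  have ee : d %/ d' = e by rewrite {1}dE mulnK.
  have ChE : Ch H c z a = FF H (z ^+ (d %/ d'))%R c a'.
    by apply: eq_bigr => u _; rewrite ee -exprM aE mulnA.
  have Fb := FF_bound d1 H d'0 dd pw c ca.
  have Kc := K_card d1 d'0 dd.
  have nL : ~~ (d' %| L).
    apply: contra ha => /dvdnP [s Ls].
    have : d %/ d' = (d %/ L) * s by rewrite -{1}(divnK Ld) Ls mulnA mulnK.
    rewrite ee => es; apply: (dvdn_trans (dvdn_mulr s (dvdnn _))).
    by rewrite -es dvdn_gcdl.
  have nd' : ~~ (d' %| B`!).
    by apply: contra nL => h; rewrite /L dvdn_gcd dd h.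
  have [p pd np] : exists2 p, p \in primes d' & ~~ (d'`_p %| B`!).
    apply/allPn; apply: contra nd' => /allP h.
    by apply/dvdn_partP => // q hq; exact: h.
  have Bp : B < d'`_p.
    by rewrite ltnNge; apply: contra np => hp; apply: dvdn_fact; rewrite part_gt0 hp.
  have tp := tot_part d'0 pd.
  have phi0 : 0 < totient d' by rewrite totient_gt0.
  have KH : totient d' * #|KK d d'| <= m * #|H| by rewrite [m * _]mulnC Lag.
  have ki := key_ineq (h := #|H :&: KK d d'|) hn m0 phi0 (erefl B)
    (subset_leq_card (subsetIr _ _)) KH Bp tp dT.
  rewrite ChE -ler_sqr ?nnegrE ?mulr_ge0 ?ler0n //.
  rewrite exprMn -!natrX; apply: (le_trans (ler_wpM2r _ Fb)); first exact: ler0n.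
  by rewrite -natrM ler_nat.
set beta := ((#|H| * (k * L))%:R / d%:R : algC)%R.
have dpos : (0 < d%:R :> algC)%R by rewrite ltr0n.
have b0 : (0 <= beta)%R by rewrite divr_ge0 ?ler0n.
have bd : (beta * d%:R <= (#|H| * (k * L))%:R)%R.
  by rewrite /beta divfK // pnatr_eq0 -lt0n.
have hb : forall a : 'I_d, ~~ (d %/ L %| a) -> (`|Ch H c z a| <= beta)%R.
  by move=> a ha; rewrite ler_pdivlMr // bound.
have NNp := NN_pos d1 L0 Ld k0 hT pz b0 bd hb.
case: (pickP (fun u => (u \in (H :* c)%g) && (unit_residue u < 2 * (k * L)))) =>
   [u /andP[hu hlt] | none].
  exists u => //; rewrite rho_gt0 //=.
  by move: hlt kP1; rewrite PE; nia.
move: NNp; rewrite /NN big1 // => u hu; apply: big1 => j1 _; apply: big1 => j2 _.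
have := none u; rewrite hu /= => /negbT; rewrite -leqNgt => h.
case: eqP => // ee; move: h; rewrite ee.
have := ltn_ord j1; have := ltn_ord j2; lia.
Qed.
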